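(* Let $S\subseteq\{0,1\}^n$ and $f:S\to\{0,1\}$. If $f$ is total (i.e. $S=\{0,1\}^n$) then $\mathsf{maxPI}(f)\le\sqrt{C_0(f)C_1(f)}$. If $f$ is partial then $\mathsf{maxPI}(f)\le\min\{\sqrt{nC_0(f)},\sqrt{nC_1(f)}\}$.
   Context: A certificate for $f$ on $x\in S$ is a set $I\subseteq[n]$ such that every $y\in S$ with $y_i=x_i$ for all $i\in I$ satisfies $f(y)=f(x)$. $C_0(f)$ (resp. $C_1(f)$) is the maximum over $x\in f^{-1}(0)$ (resp. $f^{-1}(1)$) of the minimum size of a certificate for $x$. With $p=\{p_x:x\in S\}$ ranging over families of probability distributions on $[n]$, $$\mathsf{maxPI}(f)=\min_{p}\ \max_{x,y\in S:\ f(x)\neq f(y)} \frac{1}{\max_{i:\,x_i\neq y_i}\sqrt{p_x(i)p_y(i)}}.$$ *)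

(* Defs.v *)
From HB Require Import structures.
From mathcomp Require Import all_boot all_order all_algebra.
From mathcomp Require Import all_classical all_reals.
From mathcomp Require Import ereal.
Set Implicit Arguments. Unset Strict Implicit. Unset Printing Implicit Defensive.
Import Order.TTheory GRing.Theory Num.Theory.
Local Open Scope ring_scope.
Local Open Scope classical_set_scope.

Definition inp (n : nat) := {ffun 'I_n -> bool}.

Definition isCert n (S : {set inp n}) (f : inp n -> bool) (x : inp n)
    (I : {set 'I_n}) : bool :=
  [forall y in S, [forall i in I, y i == x i] ==> (f y == f x)].

(* minimum size of a certificate for x (the full set [n] is always one,
   so the minimum is <= n and the default n is harmless). *)
Definition minCert n (S : {set inp n}) (f : inp n -> bool) (x : inp n) : nat :=
  \big[minn/n]_(I : {set 'I_n} | isCert S f x I) #|I|.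

(* C_b(f): max over x in f^{-1}(b) of minCert (0 if f^{-1}(b) is empty). *)
Definition Cb n (S : {set inp n}) (f : inp n -> bool) (b : bool) : nat :=
  \max_(x in S | f x == b) minCert S f x.

Definition C0 n (S : {set inp n}) f := Cb S f false.
Definition C1 n (S : {set inp n}) f := Cb S f true.

Definition isDist (R : realType) n (q : 'I_n -> R) : Prop :=
  (forall i, 0 <= q i) /\ \sum_(i < n) q i = 1.

Definition pairVal (R : realType) n (p : inp n -> 'I_n -> R) (x y : inp n)
    : \bar R :=
  let m := \big[Num.max/0]_(i | x i != y i) Num.sqrt (p x i * p y i) in
  if m == 0 then +oo%E else (m^-1)%:E.

(* max over pairs x, y in S with f x <> f y (0 if there are none) *)
Definition PIobj (R : realType) n (S : {set inp n}) (f : inp n -> bool)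
    (p : inp n -> 'I_n -> R) : \bar R :=
  \big[Order.max/0%E]_(xy : inp n * inp n |
      [&& xy.1 \in S, xy.2 \in S & f xy.1 != f xy.2]) pairVal p xy.1 xy.2.

Definition maxPI (R : realType) n (S : {set inp n}) (f : inp n -> bool) : \bar R :=
  ereal_inf [set PIobj S f p | p in
               [set p : inp n -> 'I_n -> R | forall x, x \in S -> isDist (p x)]].

(* Main.v *)
Require Import Defs.
From HB Require Import structures.
From mathcomp Require Import all_boot all_order all_algebra.
From mathcomp Require Import all_classical all_reals.
From mathcomp Require Import ereal.
Import Order.TTheory GRing.Theory Num.Theory.
Local Open Scope ring_scope.

Lemma key (R : realType) n (S : {set inp n}) (f : inp n -> bool)
  (p : inp n -> 'I_n -> R) (B : R) :
  (forall x, x \in S -> isDist (p x)) -> 0 <= B ->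
  (forall x y, x \in S -> y \in S -> f x != f y ->
     exists i, x i != y i /\ 1 <= B ^+ 2 * (p x i * p y i)) ->
  (maxPI R S f <= B%:E)%E.
Proof.
move=> hp hB hpair.
apply: (@le_trans _ _ (PIobj S f p)).
  by apply: ereal_inf_lbound; exists p.
rewrite /PIobj; apply: bigmax_le; first by rewrite lee_fin.
case=> x y /and3P[/= xS yS fxy].
have [i [xyi hi]] := hpair x y xS yS fxy.
rewrite /pairVal /=.
set m := \big[_/_]_(j | _) _.
have hq : 0 < p x i * p y i.
  rewrite lt_def; apply/andP; split; last first.
    by apply: mulr_ge0; [case: (hp x xS) | case: (hp y yS)].
  by apply/eqP=> h; move: hi; rewrite h mulr0 ler10.
have hm : Num.sqrt (p x i * p y i) <= m.
  by rewrite /m (bigD1 i) //= le_max lexx.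
have hm0 : 0 < m by apply: lt_le_trans hm; rewrite sqrtr_gt0.
rewrite gt_eqF // lee_fin.
have hBs : 1 <= B * Num.sqrt (p x i * p y i).
  by rewrite -(ger0_norm hB) -sqrtr_sqr -sqrtrM ?sqr_ge0 // -(@sqrtr1 R) ler_wsqrtr.
rewrite -[leLHS]mul1r ler_pdivrMr //.
by apply: (le_trans hBs); rewrite ler_wpM2l.
Qed.

Section Certs.
Variables (n : nat) (S : {set inp n}) (f : inp n -> bool).

Definition Acert (x : inp n) : {set 'I_n} :=
  [arg min_(I < [set: 'I_n] | isCert S f x I) #|I|].
Definition Jc (x : inp n) : {set 'I_n} :=
  if Acert x == finset.set0 then [set: 'I_n] else Acert x.

Lemma cert_setT x : isCert S f x [set: 'I_n].
Proof.
apply/forallP=> y; apply/implyP=> yS; apply/implyP=> /forallP h.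
have -> : y = x by apply/ffunP=> i; apply/eqP; exact: (implyP (h i) (finset.in_setT i)).
by [].
Qed.

Lemma Acert_cert x : isCert S f x (Acert x).
Proof. by rewrite /Acert; case: arg_minnP => //; apply: cert_setT. Qed.

Lemma Acert_le x : (#|Acert x| <= minCert S f x)%N.
Proof.
rewrite /Acert; case: arg_minnP; first exact: cert_setT.
move=> I hI hmin; rewrite /minCert.
apply: (big_ind (fun v => #|I| <= v)%N).
- by rewrite -[X in (_ <= X)%N]card_ord max_card.
- by move=> a b ha hb; rewrite leq_min ha hb.
- by move=> J hJ; apply: hmin.
Qed.

Lemma minCert_le x : x \in S -> (minCert S f x <= Cb S f (f x))%N.
Proof. by move=> xS; rewrite /Cb; apply: (@leq_bigmax_cond _ _ _ x); rewrite xS eqxx. Qed.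

Lemma Jc_cert x : isCert S f x (Jc x).
Proof. by rewrite /Jc; case: ifP => _; [apply: cert_setT | apply: Acert_cert]. Qed.

Lemma Jc_pos x : (0 < n)%N -> (0 < #|Jc x|)%N.
Proof.
move=> n0; rewrite /Jc; case: ifP => h.
  by rewrite cardsT card_ord.
by rewrite card_gt0 h.
Qed.

Lemma cert_diff x y I : isCert S f x I -> y \in S -> f y != f x ->
  exists2 i, i \in I & x i != y i.
Proof.
move=> hc yS fyx.
have : ~~ [forall i in I, y i == x i].
  apply: contra fyx => h; exact: (implyP (implyP (forallP hc y) yS) h).
rewrite negb_forall => /existsP [i]; rewrite negb_imply => /andP [iI ne].
by exists i => //; rewrite eq_sym.
Qed.

Lemma Jc_card x y : x \in S -> y \in S -> f y != f x ->
  (#|Jc x| <= Cb S f (f x))%N.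
Proof.
move=> xS yS fyx.
have hA : Acert x != finset.set0.
  apply/negP=> /eqP h0; have [i] := @cert_diff x y _ (Acert_cert x) yS fyx.
  by rewrite h0 finset.in_set0.
rewrite /Jc (negbTE hA).
exact: leq_trans (Acert_le x) (@minCert_le x xS).
Qed.

Lemma cert_inter x y I J : S = [set: inp n] -> isCert S f x I -> isCert S f y J ->
  f x != f y -> exists i, [/\ i \in I, i \in J & x i != y i].
Proof.
move=> ST hI hJ fxy.
case: (boolP [exists i, [&& i \in I, i \in J & x i != y i]]).
  by move=> /existsP [i /and3P [a b c]]; exists i.
move=> hne; exfalso.
pose z : inp n := [ffun i => if i \in I then x i else y i].
have zS : z \in S by rewrite ST finset.in_setT.
have e1 : f z = f x.
  apply/eqP; apply: (implyP (implyP (forallP hI z) zS)).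
  by apply/forallP=> i; apply/implyP=> iI; rewrite ffunE iI.
have e2 : f z = f y.
  apply/eqP; apply: (implyP (implyP (forallP hJ z) zS)).
  apply/forallP=> i; apply/implyP=> iJ; rewrite ffunE.
  case: ifP => iI //.
  apply: contraR hne => ne; apply/existsP; exists i.
  by rewrite iI iJ.
by move: fxy; rewrite -e1 -e2 eqxx.
Qed.

End Certs.

Definition unif (R : realType) n (J : {set 'I_n}) : 'I_n -> R :=
  fun i => if i \in J then (#|J|%:R)^-1 else 0.

Lemma unif_dist (R : realType) n (J : {set 'I_n}) :
  (0 < #|J|)%N -> isDist (@unif R n J).
Proof.
move=> hJ; split.
  by move=> i; rewrite /unif; case: ifP => // _; rewrite invr_ge0 ler0n.
rewrite /unif -big_mkcond /= sumr_const -[RHS](@mulVf _ (#|J|%:R)) ?mulr_natr //.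
by rewrite pnatr_eq0 -lt0n.
Qed.

Lemma ratio1 (R : realType) (a b : nat) : (0 < a)%N -> (a <= b)%N ->
  1 <= (b%:R : R) * (a%:R)^-1.
Proof.
move=> a0 ab; rewrite ler_pdivlMr ?ltr0n // mul1r ler_nat //.
Qed.

Lemma partial_bound (R : realType) (n : nat) (S : {set inp n})
    (f : inp n -> bool) (b : bool) : (0 < n)%N ->
  (maxPI R S f <= (Num.sqrt (n%:R * (Cb S f b)%:R))%:E)%E.
Proof.
move=> n0.
pose p (x : inp n) : 'I_n -> R :=
  if f x == b then @unif R n (Jc n S f x) else @unif R n [set: 'I_n].
set B := Num.sqrt _.
have hB2 : B ^+ 2 = (n * Cb S f b)%:R by rewrite sqr_sqrtr ?natrM // -natrM ler0n.
have H : forall u v, u \in S -> v \in S -> f u != f v -> f u == b ->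
    exists i, u i != v i /\ 1 <= B ^+ 2 * (p u i * p v i).
  move=> u v uS vS fuv fub.
  have fvu : f v != f u by rewrite eq_sym.
  have [i iJ ne] := @cert_diff n S f u v _ (Jc_cert n S f u) vS fvu.
  exists i; split => //.
  have fvb : f v == b = false by move/eqP: fub => <-; apply/negbTE.
  rewrite /p fub fvb /unif iJ finset.in_setT cardsT card_ord hB2.
  rewrite -invfM -natrM; apply: ratio1.
    by rewrite muln_gt0 Jc_pos.
  rewrite mulnC leq_mul2l; apply/orP; right.
  by move/eqP: fub => <-; exact: (@Jc_card n S f u v uS vS fvu).
apply: (@key R n S f p).
- move=> x xS; rewrite /p; case: ifP => _; apply: unif_dist.
    exact: Jc_pos.
  by rewrite cardsT card_ord.
- exact: sqrtr_ge0.
move=> x y xS yS fxy.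
case: (boolP (f x == b)) => fxb; first exact: H.
have fyb : f y == b.
  by clear -fxy fxb; move: fxy fxb; case: (f x); case: (f y); case: b.
have [i [ne hi]] := H y x yS xS ltac:(by rewrite eq_sym) fyb.
exists i; split; first by rewrite eq_sym. by rewrite [p x i * _]mulrC.
Qed.

Lemma total_bound (R : realType) (n : nat) (S : {set inp n})
    (f : inp n -> bool) : (0 < n)%N -> S = [set: inp n] ->
  (maxPI R S f <= (Num.sqrt ((C0 S f)%:R * (C1 S f)%:R))%:E)%E.
Proof.
move=> n0 ST.
pose p (x : inp n) : 'I_n -> R := @unif R n (Jc n S f x).
set B := Num.sqrt _.
have hB2 : B ^+ 2 = (C0 S f * C1 S f)%:R by rewrite sqr_sqrtr ?natrM // -natrM ler0n.
apply: (@key R n S f p).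
- by move=> x xS; apply: unif_dist; exact: Jc_pos.
- exact: sqrtr_ge0.
move=> x y xS yS fxy.
have [i [ix iy ne]] := @cert_inter n S f x y _ _ ST (Jc_cert n S f x) (Jc_cert n S f y) fxy.
exists i; split => //.
rewrite /p /unif ix iy hB2 -invfM -natrM; apply: ratio1.
  by rewrite muln_gt0 !Jc_pos.
have hx := @Jc_card n S f x y xS yS ltac:(by rewrite eq_sym).
have hy := @Jc_card n S f y x yS xS fxy.
move: hx hy fxy; rewrite /C0 /C1; case: (f x); case: (f y) => //= hx hy _.
  by rewrite mulnC leq_mul.
by rewrite leq_mul.
Qed.

Theorem mainTheorem12 (R : realType) (n : nat) (S : {set inp n})
    (f : inp n -> bool) :
  (0 < n)%N ->
  (S = [set: inp n] ->
     (maxPI R S f <= (Num.sqrt ((C0 S f)%:R * (C1 S f)%:R))%:E)%E) /\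
  (maxPI R S f <= (Num.min (Num.sqrt (n%:R * (C0 S f)%:R))
                           (Num.sqrt (n%:R * (C1 S f)%:R)))%:E)%E.
Proof.
move=> n0; split; first exact: total_bound.
set a := Num.sqrt _; set b := Num.sqrt _.
have ha : (maxPI R S f <= a%:E)%E by exact: partial_bound.
have hb : (maxPI R S f <= b%:E)%E by exact: partial_bound.
by rewrite /Order.min; case: ifP.
Qed.
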